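(* Let $S$ be a specialisation independent scheduling rule. For every clause $c=(h\leftarrow B)$ there exist p-goals $M_s,M_q$ with $B=M_s|M_q$ (depending only on $c$) such that every priority derivation step $a|K\xrightarrow{c\xi,\eta}R$ belonging to $S$ satisfies $R=(M_s\xi\underline{\pi}|K|M_q\xi\underline{\pi})\eta$ for some shifting $\underline{\pi}$. In other words, $S$ is of stack-queue type; together with the fact that complete stack-queue sets are specialisation independent scheduling rules, specialisation independent scheduling rules are exactly the complete sets of stack-queue type.
   Context: A p-atom is a pair $a[p]$ of an atom $a$ and a rational priority $p$. A p-goal is a finite set of p-atoms with pairwise distinct priorities, regarded as a list ordered by increasing priority. Substitutions act on atoms and leave priorities unchanged. A clause is $h\leftarrow B$ with $h$ an atom and $B$ a p-goal. For p-goals with no common priority, $F+G=F\cup G$; $F|G$ denotes $F+G$ when all priorities of $F$ are smaller than those of $G$. A shifting $\underline{\pi}$ is a strictly increasing bijection $\mathbb{Q}\to\mathbb{Q}$ acting on priorities ($G\underline\pi$). Priority derivation step: for a p-goal $a|F$ ($a$ of least priority), clause $c=(h\leftarrow B)$, renaming $\xi$ with $var(a|F)\cap var(c\xi)=\emptyset$, idempotent relevant mgu $\theta$ of $a$ and $h\xi$, shifting $\underline{\pi}$ with $F$, $B\xi\underline{\pi}$ sharing no priority: $a|F\xrightarrow{c\xi,\theta}(F+B\xi\underline{\pi})\theta$. Lowering: for $c=(h\leftarrow B)$, a step $a\lambda\underline{\sigma}|(K\lambda\underline{\sigma}+X)\xrightarrow{c}(X+K\lambda\underline{\sigma}+B\xi''\underline{\theta}'')\alpha''$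 is a lowering by $X$ of a step $a|K\xrightarrow{c}(K+B\xi'\underline{\theta}')\alpha'$ ($\lambda$ a substitution, $\underline\sigma$ a shifting); it is a congruent lowering by $X$ if some shifting $\underline{\rho}$ has $K\underline{\rho}=K\underline{\sigma}$ and $B\underline{\theta}'\underline{\rho}=B\underline{\theta}''$. Steps are congruent lowerings of each other if each is a congruent lowering of the other. A set $S$ of steps is complete if (i) whenever some step $G\xrightarrow{c}\cdot$ exists, some step $G\xrightarrow{c}\cdot$ lies in $S$, and (ii) $S$ contains every step that is a congruent lowering of each other with a step of $S$; it is specialisation independent if whenever $Ds_1,Ds_2\in S$ and $Ds_2$ is a lowering of $Ds_1$ by $X$, $Ds_2$ is a congruent lowering of $Ds_1$ by $X$. A specialisation independent scheduling rule is a complete specialisation independent set of steps. Stack-queue type: a set $SQ$ of priority derivation steps is of stack-queue type if for every clause $c=(h\leftarrow B)$ there are p-goals $M_s,M_q$ with $B=M_s|M_q$ such that every step $a|K\xrightarrow{c\xi,\mu}R$ in $SQ$ satisfies $R=(M_s\xi\underline{\gamma}|K|M_q\xi\underline{\gamma})\mu$ for some shifting $\underline{\gamma}$. *)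

(* Defs.v *)
From mathcomp Require Import all_boot all_order all_algebra.
Set Implicit Arguments. Unset Strict Implicit. Unset Printing Implicit Defensive.
Import Order.TTheory GRing.Theory Num.Theory.
Local Open Scope ring_scope.

Section Syntax.
Variables (Fsym Psym : Type).

Inductive term := Var of nat | Fn of Fsym & seq term.

Record atom := Atom { apred : Psym; aargs : seq term }.

Fixpoint tvars (t : term) : seq nat :=
  match t with Var x => [:: x] | Fn _ ts => flatten (map tvars ts) end.

Definition avars (a : atom) : seq nat := flatten (map tvars (aargs a)).

Definition subst := nat -> term.

Fixpoint tsubst (s : subst) (t : term) : term :=
  match t with Var x => s x | Fn f ts => Fn f (map (tsubst s) ts) end.

Definition asubst (s : subst) (a : atom) : atom :=
  Atom (apred a) (map (tsubst s) (aargs a)).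

Definition renaming (xi : subst) : Prop :=
  exists f : nat -> nat, bijective f /\ forall x, xi x = Var (f x).

Definition unifier (th : subst) (a b : atom) : Prop := asubst th a = asubst th b.

Definition mgu (th : subst) (a b : atom) : Prop :=
  unifier th a b /\
  forall s, unifier s a b -> exists d : subst, forall x, s x = tsubst d (th x).

Definition idempotent (th : subst) : Prop :=
  forall x, tsubst th (th x) = th x.

Definition relevant (th : subst) (a b : atom) : Prop :=
  forall x, th x <> Var x ->
    x \in avars a ++ avars b /\
    forall y, y \in tvars (th x) -> y \in avars a ++ avars b.

Definition shifting (pi : rat -> rat) : Prop :=
  (forall x y : rat, x < y -> pi x < pi y) /\ (forall y, exists x, pi x = y).

(* p-atoms and p-goals: a p-goal is a finite set of p-atoms with pairwise
   distinct priorities, represented as the list of its elements ordered by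
   strictly increasing priority (so set equality = list equality). *)
Definition patom := (atom * rat)%type.
Definition pgoal := seq patom.

Definition is_pgoal (G : pgoal) : Prop :=
  sorted (fun x y : patom => x.2 < y.2) G.

Definition prios (G : pgoal) : seq rat := map snd G.

Definition gvars (G : pgoal) : seq nat := flatten (map (fun p => avars p.1) G).

Definition gsubst (s : subst) (G : pgoal) : pgoal :=
  map (fun p => (asubst s p.1, p.2)) G.

Definition gshift (pi : rat -> rat) (G : pgoal) : pgoal :=
  map (fun p => (p.1, pi p.2)) G.

Definition pdisj (F G : pgoal) : Prop :=
  forall p, p \in prios F -> p \notin prios G.

Definition plt (F G : pgoal) : Prop :=
  forall p q, p \in prios F -> q \in prios G -> p < q.

(* F + G (used only when F and G share no priority): the union, as a
   priority-sorted list *)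
Definition padd (F G : pgoal) : pgoal :=
  sort (fun x y : patom => x.2 <= y.2) (F ++ G).

Definition clause := (atom * pgoal)%type.

(* a step  a|F --c xi, th--> R  (the shifting is not part of the step) *)
Record step := Step {
  st_goal : pgoal;
  st_clause : clause;
  st_ren : subst;
  st_mgu : subst;
  st_res : pgoal }.

Definition step_via (s : step) (pi : rat -> rat) : Prop :=
  let h := (st_clause s).1 in
  let B := (st_clause s).2 in
  let xi := st_ren s in
  let th := st_mgu s in
  is_pgoal (st_goal s) /\ is_pgoal B /\ shifting pi /\ renaming xi /\
  exists a F, st_goal s = a :: F /\
    (forall x, x \in gvars (st_goal s) ->
       x \notin avars (asubst xi h) ++ gvars (gsubst xi B)) /\
    idempotent th /\ mgu th a.1 (asubst xi h) /\ relevant th a.1 (asubst xi h) /\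
    pdisj F (gshift pi (gsubst xi B)) /\
    st_res s = gsubst th (padd F (gshift pi (gsubst xi B))).

Definition is_step (s : step) : Prop := exists pi, step_via s pi.

(* the shape part of "s2 is a lowering of s1 by X", with witnesses
   lambda, sigma, and the decomposition a|K of the goal of s1 *)
Definition lowering_by (s2 s1 : step) (X : pgoal)
    (lam : subst) (sig : rat -> rat) (a : patom) (K : pgoal) : Prop :=
  st_clause s2 = st_clause s1 /\ shifting sig /\ is_pgoal X /\
  st_goal s1 = a :: K /\
  pdisj (gshift sig (gsubst lam K)) X /\
  (forall q, q \in prios X -> sig a.2 < q) /\
  st_goal s2 = (asubst lam a.1, sig a.2) :: padd (gshift sig (gsubst lam K)) X.

Definition lowering (s2 s1 : step) (X : pgoal) : Prop :=
  is_step s1 /\ is_step s2 /\ exists lam sig a K, lowering_by s2 s1 X lam sig a K.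

Definition cong_lowering (s2 s1 : step) (X : pgoal) : Prop :=
  exists lam sig a K th1 th2 rho,
    lowering_by s2 s1 X lam sig a K /\
    step_via s1 th1 /\ step_via s2 th2 /\ shifting rho /\
    gshift rho K = gshift sig K /\
    gshift rho (gshift th1 (st_clause s1).2) = gshift th2 (st_clause s1).2.

Definition cong_each_other (s1 s2 : step) : Prop :=
  (exists X, cong_lowering s1 s2 X) /\ (exists X, cong_lowering s2 s1 X).

Definition complete (S : step -> Prop) : Prop :=
  (forall G c, (exists s, is_step s /\ st_goal s = G /\ st_clause s = c) ->
      exists s, S s /\ st_goal s = G /\ st_clause s = c) /\
  (forall s s', is_step s -> S s' -> cong_each_other s s' -> S s).

Definition spec_independent (S : step -> Prop) : Prop :=
  forall s1 s2 X, S s1 -> S s2 -> lowering s2 s1 X -> cong_lowering s2 s1 X.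

Definition sched_rule (S : step -> Prop) : Prop :=
  (forall s, S s -> is_step s) /\ complete S /\ spec_independent S.

Definition stack_queue (S : step -> Prop) : Prop :=
  forall (h : atom) (B : pgoal), is_pgoal B ->
  exists Ms Mq : pgoal,
    is_pgoal Ms /\ is_pgoal Mq /\ plt Ms Mq /\ B = Ms ++ Mq /\
    forall s, S s -> st_clause s = (h, B) ->
      exists a K gam, st_goal s = a :: K /\ shifting gam /\
        let Ms' := gshift gam (gsubst (st_ren s) Ms) in
        let Mq' := gshift gam (gsubst (st_ren s) Mq) in
        plt Ms' K /\ plt K Mq' /\ plt Ms' Mq' /\
        st_res s = gsubst (st_mgu s) (Ms' ++ K ++ Mq').

End Syntax.

(* Main.v *)
Require Import Defs.
From Stdlib Require List.
From mathcomp Require Import all_boot all_order all_algebra.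
From mathcomp Require Import ring lra zify.
Set Implicit Arguments. Unset Strict Implicit. Unset Printing Implicit Defensive.
Import Order.TTheory GRing.Theory Num.Theory.
Local Open Scope ring_scope.


Lemma In_mem (T : eqType) (x : T) s : List.In x s <-> x \in s.
Proof.
elim: s => [|y s IH] //=; rewrite in_cons IH; split.
- by case=> [->|->]; rewrite ?eqxx ?orbT.
- by case/orP=> [/eqP->|]; [left|right].
Qed.

Lemma In_map_eq (T U : Type) (f g : T -> U) l x :
  map f l = map g l -> List.In x l -> f x = g x.
Proof.
elim: l => [|y l IH] //= [e1 e2] [<-|Hx] //; exact: IH.
Qed.

Lemma all_In (T : Type) (p : pred T) l x : all p l -> List.In x l -> p x.
Proof. elim: l => [|y l IH] //= /andP[Hy Hl] [<-|Hx] //; exact: IH. Qed.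

Lemma In_nth_lt (T : Type) (x0 : T) s i : (i < size s)%N -> List.In (nth x0 s i) s.
Proof. elim: s i => [|y s IH] [|i] //= Hi; [by left|right; exact: IH]. Qed.

Lemma In_nthP (T : Type) (x : T) s : List.In x s -> exists i, (i < size s)%N /\ nth x s i = x.
Proof.
elim: s => [|y s IH] //= [<-|Hx]; first by exists 0%N.
by case: (IH Hx) => i [Hi Hn]; exists i.+1.
Qed.

Lemma In_sort (T : Type) (r : rel T) s x : List.In x (sort r s) <-> List.In x s.
Proof.
case: (perm_iota_sort r x s) => ix Hp ->; split.
- case/List.in_map_iff => i [<- /In_mem Hi].
  apply: In_nth_lt; by rewrite (perm_mem Hp) mem_iota add0n in Hi.
- move=> Hx; case: (In_nthP Hx) => i [Hi Hn]; apply/List.in_map_iff; exists i; split=> //.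
  by apply/In_mem; rewrite (perm_mem Hp) mem_iota.
Qed.

Lemma In_map_snd (T : Type) (f : T -> rat) l y :
  y \in map f l -> exists x, List.In x l /\ f x = y.
Proof.
elim: l => [|z l IH] //=; rewrite in_cons => /orP[/eqP->|/IH [x [H1 H2]]].
- by exists z; split=> //; left.
- by exists x; split=> //; right.
Qed.

Lemma In_map_mem (T : Type) (f : T -> rat) l x : List.In x l -> f x \in map f l.
Proof. elim: l => [|z l IH] //= [->|H]; rewrite in_cons ?eqxx // IH ?orbT //. Qed.

Section Sec.
Variables (Fsym Psym : Type).
Local Notation patom := (patom Fsym Psym).
Local Notation pgoal := (pgoal Fsym Psym).
Local Notation In := List.In.

Lemma is_pgoalE (G : pgoal) : is_pgoal G = sorted <%R (prios G).
Proof. by rewrite /is_pgoal /prios sorted_map. Qed.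

Lemma prios_gshift f (G : pgoal) : prios (gshift f G) = map f (prios G).
Proof. by rewrite /prios /gshift; elim: G => //= x G ->. Qed.

Lemma prios_gsubst s (G : pgoal) : prios (gsubst s G) = prios G.
Proof. by rewrite /prios /gsubst; elim: G => //= x G ->. Qed.

Lemma is_pgoal_gsubst s (G : pgoal) : is_pgoal (gsubst s G) = is_pgoal G.
Proof. by rewrite !is_pgoalE prios_gsubst. Qed.

Lemma is_pgoal_gshift f (G : pgoal) : shifting f -> is_pgoal G -> is_pgoal (gshift f G).
Proof.
case=> Hf _; rewrite !is_pgoalE prios_gshift => H.
by apply: homo_sorted H => x y; apply: Hf.
Qed.

Lemma pgoal_head_lt (x : patom) l y : is_pgoal (x :: l) -> In y l -> x.2 < y.2.
Proof.
move=> H Hy; have Ht : transitive (fun x y : patom => x.2 < y.2).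
  by move=> a b c H1 H2; exact: lt_trans H1 H2.
move: H; rewrite /is_pgoal /= => H.
have := all_In (order_path_min Ht H) Hy; exact.
Qed.

Lemma sorted_In_eq (l1 l2 : pgoal) : is_pgoal l1 -> is_pgoal l2 ->
  (forall x, In x l1 <-> In x l2) -> l1 = l2.
Proof.
elim: l1 l2 => [|x l1 IH] [|y l2] // H1 H2 E.
- by case: (proj2 (E y) (or_introl erefl)).
- by case: (proj1 (E x) (or_introl erefl)).
have S1 := path_sorted H1; have S2 := path_sorted H2.
case: (proj1 (E x) (or_introl erefl)) => [eyx|Hx].
- subst y; congr (_ :: _); apply: IH => // z; split=> Hz.
  + case: (proj1 (E z) (or_intror Hz)) => // ez; subst z.
    by have := pgoal_head_lt H1 Hz; rewrite ltxx.
  + case: (proj2 (E z) (or_intror Hz)) => // ez; subst z.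
    by have := pgoal_head_lt H2 Hz; rewrite ltxx.
- have lt1 := pgoal_head_lt H2 Hx.
  case: (proj2 (E y) (or_introl erefl)) => [exy|Hy].
  + by subst y; rewrite ltxx in lt1.
  + by have := lt_trans (pgoal_head_lt H1 Hy) lt1; rewrite ltxx.
Qed.

Lemma In_padd (F G : pgoal) x : In x (padd F G) <-> In x (F ++ G).
Proof. exact: In_sort. Qed.

Lemma padd_char (F G L : pgoal) : is_pgoal L ->
  (forall x, In x L <-> In x (F ++ G)) -> uniq (prios (F ++ G)) -> padd F G = L.
Proof.
move=> HL E U; apply: sorted_In_eq => //.
- rewrite is_pgoalE /padd.
  have -> : prios (sort (fun x y : patom => x.2 <= y.2) (F ++ G)) =
            sort <=%R (prios (F ++ G)) by rewrite /prios sort_map.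
  rewrite lt_sorted_uniq_le sort_uniq U /= sort_sorted //; exact: le_total.
- move=> x; split=> H; [apply/E; apply/In_padd | apply/In_padd; apply/E] => //.
Qed.

Lemma uniq_padd (F G : pgoal) : is_pgoal F -> is_pgoal G -> pdisj F G ->
  uniq (prios (F ++ G)).
Proof.
rewrite !is_pgoalE => HF HG D; rewrite /prios map_cat cat_uniq -!/(prios _).
move: HF HG; rewrite !lt_sorted_uniq_le => /andP[-> _] /andP[-> _] /=.
rewrite andbT; apply/hasPn => y Hy; apply/negP => Hf.
by move: (D y Hf); rewrite Hy.
Qed.

End Sec.

Section Terms.
Variables (Fsym Psym : Type).
Local Notation term := (term Fsym).
Local Notation atom := (atom Fsym Psym).
Local Notation patom := (patom Fsym Psym).
Local Notation pgoal := (pgoal Fsym Psym).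
Local Notation In := List.In.
Local Notation V := (@Var Fsym).

Definition term_ind2 (P : term -> Prop) (HV : forall x, P (V x))
  (HF : forall f ts, (forall t, In t ts -> P t) -> P (Fn f ts)) : forall t, P t :=
  fix F t := match t with
  | Var x => HV x
  | Fn f ts => HF f ts
      ((fix G ts : forall t, In t ts -> P t :=
          match ts with
          | [::] => fun t H => False_ind _ H
          | u :: us => fun t H => match H with
                 | or_introl e => eq_ind u P (F u) t e
                 | or_intror H' => G us t H' end end) ts)
  end.

Lemma mem_flatten_map (T : Type) (f : T -> seq nat) l x :
  x \in flatten (map f l) -> exists t, In t l /\ x \in f t.
Proof.
elim: l => [|y l IH] //=; rewrite mem_cat => /orP[H|/IH [t [H1 H2]]].
- by exists y; split=> //; left.
- by exists t; split=> //; right.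
Qed.

Lemma mem_flatten_map2 (T : Type) (f : T -> seq nat) l x t :
  In t l -> x \in f t -> x \in flatten (map f l).
Proof.
elim: l => [|y l IH] //= [<-|Ht] Hx; rewrite mem_cat ?Hx //.
by rewrite IH ?orbT.
Qed.

Lemma tsubst_id_on (s : subst Fsym) t :
  (forall x, x \in tvars t -> s x = V x) -> tsubst s t = t.
Proof.
elim/term_ind2: t => [x|f ts IH] H /=; first by apply: H; rewrite inE.
congr (Fn f _); have : forall t, In t ts -> tsubst s t = t.
  move=> t Ht; apply: IH => // x Hx; apply: H => /=.
  exact: mem_flatten_map2 Ht Hx.
elim: ts {IH H} => //= t ts IH E; rewrite E; last by left.
by rewrite IH // => u Hu; apply: E; right.
Qed.

Lemma asubst_id_on (s : subst Fsym) (a : atom) :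
  (forall x, x \in avars a -> s x = V x) -> asubst s a = a.
Proof.
case: a => P args H; rewrite /asubst /=; congr (Atom P _).
have : forall t, In t args -> tsubst s t = t.
  move=> t Ht; apply: tsubst_id_on => x Hx; apply: H.
  exact: mem_flatten_map2 Ht Hx.
elim: args {H} => //= t ts IH E; rewrite E; last by left.
by rewrite IH // => u Hu; apply: E; right.
Qed.

Lemma asubst_Var (a : atom) : asubst V a = a.
Proof. exact: asubst_id_on. Qed.

Lemma gsubst_Var (G : pgoal) : gsubst V G = G.
Proof. by elim: G => //= [[a p] G ->]; rewrite asubst_Var. Qed.

Lemma gshift_id (G : pgoal) : gshift id G = G.
Proof. by elim: G => //= [[a p] G ->]. Qed.

Lemma gvars_cons (x : patom) (l : pgoal) : gvars (x :: l) = avars x.1 ++ gvars l.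
Proof. by []. Qed.

Lemma gvars_cat (l1 l2 : pgoal) : gvars (l1 ++ l2) = gvars l1 ++ gvars l2.
Proof. by rewrite /gvars map_cat flatten_cat. Qed.

End Terms.

Lemma ub_exists (L : seq rat) : exists M : rat, forall x, x \in L -> x < M.
Proof.
elim: L => [|y L [M HM]]; first by exists 0.
exists (Num.max M (y + 1)) => x; rewrite in_cons => /orP[/eqP->|/HM Hx].
- by rewrite lt_max; apply/orP; right; rewrite ltrDl.
- by rewrite lt_max Hx.
Qed.

Lemma shifting_add (c : rat) : shifting (fun x => x + c).
Proof.
split; first by move=> x y H; rewrite ltrD2r.
by move=> y; exists (y - c); rewrite subrK.
Qed.

Lemma shifting_lin (p d : rat) : 0 < d -> shifting (fun x => p + d * x).
Proof.
move=> Hd; split; first by move=> x y H; rewrite ltrD2l ltr_pM2l.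
move=> y; exists ((y - p) / d); rewrite mulrC -mulrA mulVf ?mulr1 ?subrKC //.
by rewrite gt_eqF.
Qed.

Lemma shift_lt_iff f x y : shifting f -> (f x < f y) = (x < y).
Proof.
case=> Hf _; apply/idP/idP; last exact: Hf.
move=> H; case: (ltgtP x y) => // [Hyx|Exy].
- by have := lt_trans H (Hf _ _ Hyx); rewrite ltxx.
- by rewrite Exy ltxx in H.
Qed.

Section Steps.
Variables (Fsym Psym : Type).
Local Notation term := (term Fsym).
Local Notation atom := (atom Fsym Psym).
Local Notation patom := (patom Fsym Psym).
Local Notation pgoal := (pgoal Fsym Psym).
Local Notation step := (step Fsym Psym).
Local Notation In := List.In.
Local Notation V := (@Var Fsym).

Lemma prios_padd (F G : pgoal) :
  prios (padd F G) = sort <=%R (prios (F ++ G)).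
Proof. by rewrite /prios /padd sort_map. Qed.

Lemma gshift_comp f g (G : pgoal) : gshift f (gshift g G) = gshift (f \o g) G.
Proof. by elim: G => //= x G ->. Qed.

Lemma In_gshift_gsubst (lam : subst Fsym) sig (K : pgoal) x :
  In x K -> In (asubst lam x.1, sig x.2) (gshift sig (gsubst lam K)).
Proof. elim: K => [|y K IH] //= [->|H]; [by left|right; exact: IH]. Qed.

Lemma step_via_goal (s : step) p a F : step_via s p -> st_goal s = a :: F ->
  pdisj F (gshift p (gsubst (st_ren s) (st_clause s).2)) /\
  st_res s = gsubst (st_mgu s) (padd F (gshift p (gsubst (st_ren s) (st_clause s).2))).
Proof.
move=> [_ [_ [_ [_ [a' [F' [E [_ [_ [_ [_ [H1 H2]]]]]]]]]]]] E'.
by rewrite E' in E; case: E => _ EF; subst F'.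
Qed.

Lemma step_unique (s : step) p1 p2 : step_via s p1 -> step_via s p2 ->
  forall b, b \in prios (st_clause s).2 -> p1 b = p2 b.
Proof.
move=> V1 V2; have [Hs [HB [Sh1 _]]] := V1; have [_ [_ [Sh2 _]]] := V2.
have [a [F [EG _]]] := V1.2.2.2.2.
have [D1 R1] := step_via_goal V1 EG; have [D2 R2] := step_via_goal V2 EG.
set B := (st_clause s).2 in D1 R1 D2 R2 HB *.
set xi := st_ren s in D1 R1 D2 R2.
have E : sort <=%R (prios F ++ map p1 (prios B)) =
         sort <=%R (prios F ++ map p2 (prios B)).
  have := congr1 (@prios _ _) (etrans (esym R1) R2).
  by rewrite !prios_gsubst !prios_padd /prios !map_cat -!/(prios _)
     !prios_gshift !prios_gsubst.
have Hm : map p1 (prios B) = map p2 (prios B).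
  have Hlt : transitive (<%R : rel rat) by move=> ? ? ?; apply: lt_trans.
  apply: (irr_sorted_eq Hlt); first exact: ltxx.
  - by move: HB; rewrite is_pgoalE => HB; apply: homo_sorted HB => x y; apply: Sh1.1.
  - by move: HB; rewrite is_pgoalE => HB; apply: homo_sorted HB => x y; apply: Sh2.1.
  have Hc : forall y, (y \in prios F ++ map p1 (prios B)) = (y \in prios F ++ map p2 (prios B)).
    by move=> y; rewrite -(mem_sort <=%R) E mem_sort.
  move=> y; apply/idP/idP => Hy.
  + have Hn : y \notin prios F.
      by apply/negP => /D1; rewrite prios_gshift prios_gsubst Hy.
    by move: (Hc y); rewrite !mem_cat Hy orbT (negbTE Hn) /= => <-.
  + have Hn : y \notin prios F.
      by apply/negP => /D2; rewrite prios_gshift prios_gsubst Hy.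
    by move: (Hc y); rewrite !mem_cat Hy orbT (negbTE Hn) /= => ->.
by move=> b Hb; apply: (eq_in_map _ _ _).2 Hm b Hb.
Qed.

Lemma pdisj_ne (s : step) p a F b x : step_via s p -> st_goal s = a :: F ->
  b \in prios (st_clause s).2 -> In x F -> p b != x.2.
Proof.
move=> V1 EG Hb Hx; have [D _] := step_via_goal V1 EG.
apply/eqP => E; have := D _ (In_map_mem snd Hx).
by rewrite -E prios_gshift prios_gsubst map_f.
Qed.

Lemma cong_pos (s1 s2 : step) X p1 p2 a K x :
  cong_lowering s2 s1 X -> step_via s1 p1 -> step_via s2 p2 ->
  st_goal s1 = a :: K -> In x K ->
  exists y, In y (behead (st_goal s2)) /\ y.2 \notin prios X /\
    forall b, b \in prios (st_clause s1).2 -> (p1 b < x.2 <-> p2 b < y.2).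
Proof.
move=> [lam [sig [a' [K' [th1 [th2 [rho [Low [V1 [V2 [Shr [EK EB]]]]]]]]]]]].
move=> W1 W2 EG Hx.
have [Ecl [Shs [HX [EG1 [Pd [Hgt EG2]]]]]] := Low.
rewrite EG in EG1; case: EG1 => _ EK'; subst K'.
exists (asubst lam x.1, sig x.2); split; [|split].
- rewrite EG2 /=; apply/In_padd; apply: List.in_or_app; left.
  exact: In_gshift_gsubst.
- by apply: Pd; apply: (In_map_mem snd (In_gshift_gsubst lam sig Hx)).
move=> b Hb /=.
have e1 := step_unique V1 W1 Hb.
have e2 : th2 b = p2 b by apply: (step_unique V2 W2); rewrite Ecl.
have e3 : rho x.2 = sig x.2.
  by have := In_map_eq EK Hx => /(congr1 snd).
have e4 : rho (th1 b) = th2 b.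
  case: (In_map_snd Hb) => z [Hz <-].
  move: EB; rewrite gshift_comp => EB.
  by have := In_map_eq EB Hz => /(congr1 snd).
by rewrite -e1 -e2 -e4 -e3 shift_lt_iff.
Qed.

End Steps.

Lemma sorted_cat_rat (l1 l2 : seq rat) : sorted <%R l1 -> sorted <%R l2 ->
  (forall x y, x \in l1 -> y \in l2 -> x < y) -> sorted <%R (l1 ++ l2).
Proof.
have Ht : transitive (<%R : rel rat) by move=> ? ? ?; apply: lt_trans.
rewrite !(sorted_pairwise Ht) pairwise_cat => -> -> H; rewrite !andbT.
by apply/allrelP => x y; apply: H.
Qed.

Lemma leq_sumn_mem (l : seq nat) x : x \in l -> (x <= sumn l)%N.
Proof.
elim: l => [|y l IH] //=; rewrite in_cons => /orP[/eqP->|/IH H].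
- exact: leq_addr.
- exact: leq_trans H (leq_addl _ _).
Qed.

Lemma filter_nil_In (T : Type) (p : pred T) l :
  (forall y, List.In y l -> ~~ p y) -> filter p l = [::].
Proof.
elim: l => [|y l IH] //= H; rewrite (negbTE (H y (or_introl erefl))).
by apply: IH => z Hz; apply: H; right.
Qed.

Lemma filter_all_In (T : Type) (p : pred T) l :
  (forall y, List.In y l -> p y) -> filter p l = l.
Proof.
elim: l => [|y l IH] //= H; rewrite (H y (or_introl erefl)) IH //.
by move=> z Hz; apply: H; right.
Qed.

Section Build.
Variables (Fsym Psym : Type).
Local Notation term := (term Fsym).
Local Notation atom := (atom Fsym Psym).
Local Notation patom := (patom Fsym Psym).
Local Notation pgoal := (pgoal Fsym Psym).
Local Notation step := (step Fsym Psym).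
Local Notation In := List.In.
Local Notation V := (@Var Fsym).

Lemma prios_filter (P : pred rat) (G : pgoal) :
  prios (filter (fun x => P x.2) G) = filter P (prios G).
Proof. by elim: G => //= x G IH; case: (P x.2); rewrite /= IH. Qed.

Lemma prios_cat (G1 G2 : pgoal) : prios (G1 ++ G2) = prios G1 ++ prios G2.
Proof. exact: map_cat. Qed.

Lemma gshift_cat f (G1 G2 : pgoal) : gshift f (G1 ++ G2) = gshift f G1 ++ gshift f G2.
Proof. exact: map_cat. Qed.

Lemma gsubst_cat s (G1 G2 : pgoal) : gsubst s (G1 ++ G2) = gsubst s G1 ++ gsubst s G2.
Proof. exact: map_cat. Qed.

Lemma split_filter (P : pred rat) (B : pgoal) : is_pgoal B ->
  (forall x y, In x B -> In y B -> x.2 < y.2 -> P y.2 -> P x.2) ->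
  B = filter (fun x => P x.2) B ++ filter (fun x => ~~ P x.2) B.
Proof.
elim: B => [|x B IH] //= HB Hm.
have HB' : is_pgoal B by apply: path_sorted HB.
case Px: (P x.2) => /=.
- congr (_ :: _); apply: IH => // y z Hy Hz; apply: Hm; by right.
- have Hn : forall y, In y B -> ~~ P y.2.
    move=> y Hy; apply/negP => Py.
    have := Hm x y (or_introl erefl) (or_intror Hy) (pgoal_head_lt HB Hy) Py.
    by rewrite Px.
  by rewrite filter_nil_In // filter_all_In.
Qed.

Lemma mk_step (G : pgoal) (h : atom) (B : pgoal) (xi th : subst Fsym) a F :
  is_pgoal G -> is_pgoal B -> renaming xi -> G = a :: F ->
  (forall x, x \in gvars G -> x \notin avars (asubst xi h) ++ gvars (gsubst xi B)) ->
  Defs.idempotent th -> mgu th a.1 (asubst xi h) -> relevant th a.1 (asubst xi h) ->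
  exists s : step, is_step s /\ st_goal s = G /\ st_clause s = (h, B).
Proof.
move=> HG HB Hxi EG Hd Hid Hmgu Hrel.
have [M1 HM1] := ub_exists (prios F).
have [M2 HM2] := ub_exists (map (fun b => - b) (prios B)).
pose pi := fun x : rat => x + (M1 + M2).
exists (Step G (h, B) xi th (gsubst th (padd F (gshift pi (gsubst xi B))))).
split=> //; exists pi; rewrite /step_via /=.
split=> //; split=> //; split; first exact: shifting_add.
split=> //; exists a, F; split=> //; split=> //; split=> //; split=> //.
split=> //; split=> //.
move=> y Hy; rewrite prios_gshift prios_gsubst; apply/negP => /mapP [b Hb Eb].
have h1 := HM1 _ Hy; have h2 := HM2 _ (map_f (fun b => - b) Hb).
move: h1; rewrite Eb /pi => h1.
have : M1 < b + (M1 + M2) by lra.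
by rewrite ltNge (ltW h1).
Qed.

Definition inst (N : nat) (s : seq term) : subst Fsym :=
  fun x => if (N <= x < N + size s)%N then nth (V 0) s (x - N) else V x.

Lemma avars_Vs P (l : seq nat) : avars (Atom P (map V l) : atom) = l.
Proof. by rewrite /avars /=; elim: l => //= x l ->. Qed.

Lemma inst_gen N P (args : seq term) :
  asubst (inst N args) (Atom P (map V (iota N (size args))) : atom) = Atom P args.
Proof.
rewrite /asubst /=; congr (Atom P _).
rewrite -map_comp.
transitivity (map (fun i => nth (V 0) args (i - N)) (iota N (size args))).
  by apply/eq_in_map => i; rewrite mem_iota /= /inst => ->.
have -> : iota N (size args) = map (addn N) (iota 0 (size args)).
  by rewrite -iotaDl addn0.
rewrite -map_comp.
transitivity (map (nth (V 0) args) (iota 0 (size args))).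
  by apply: eq_map => i /=; rewrite addKn.
exact: mkseq_nth.
Qed.

Lemma low_id (s1 s2 : step) (a : patom) K X :
  is_step s1 -> is_step s2 -> st_clause s2 = st_clause s1 ->
  st_goal s1 = a :: K -> is_pgoal X -> pdisj K X ->
  (forall q, q \in prios X -> a.2 < q) -> st_goal s2 = a :: padd K X ->
  lowering s2 s1 X.
Proof.
move=> H1 H2 Ec E1 HX Hd Hlt E2; split=> //; split=> //.
exists V, id, a, K; split=> //; split.
  by split=> // y; exists y.
split=> //; split=> //; rewrite gsubst_Var gshift_id; split=> //; split=> //.
by rewrite E2 asubst_Var; case: a {E1 E2 Hlt}.
Qed.

Lemma low_gen (s0 t : step) (h : atom) N (a1 : atom) (pa r : rat) (K : pgoal) :
  is_step s0 -> is_step t -> st_clause t = st_clause s0 ->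
  st_goal s0 = [:: (Atom (apred h) (map V (iota N (size (aargs h)))), 0);
                   (Atom (apred h) [::], 1)] ->
  pa < r -> is_pgoal K -> r \notin prios K -> (forall q, q \in prios K -> pa < q) ->
  apred a1 = apred h -> size (aargs a1) = size (aargs h) ->
  st_goal t = (a1, pa) :: padd [:: (Atom (apred h) [::], r)] K ->
  lowering t s0 K.
Proof.
move=> H1 H2 Ec E0 Hpr HK Hr HKp Ep Es Et; split=> //; split=> //.
pose sig := fun x : rat => pa + (r - pa) * x.
exists (inst N (aargs a1)), sig,
  (Atom (apred h) (map V (iota N (size (aargs h)))), 0), [:: (Atom (apred h) [::], 1)].
have s1 : sig 1 = r by rewrite /sig mulr1 addrC subrK.
have s0' : sig 0 = pa by rewrite /sig mulr0 addr0.
split=> //; split; first by apply: shifting_lin; rewrite subr_gt0.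
split=> //; split=> //; split.
  by move=> y; rewrite /= s1 inE => /eqP ->.
split; first by move=> q Hq /=; rewrite s0'; apply: HKp.
rewrite Et /= s1 s0' -Es -Ep inst_gen.
by case: a1 {Ep Es Et}.
Qed.

End Build.

Section Inst.
Variables (Fsym Psym : Type).
Local Notation term := (term Fsym).
Local Notation atom := (atom Fsym Psym).
Local Notation pgoal := (pgoal Fsym Psym).
Local Notation In := List.In.
Local Notation V := (@Var Fsym).

Lemma atom_eta (a : atom) : Atom (apred a) (aargs a) = a.
Proof. by case: a. Qed.

Lemma inst_facts (h : atom) N : (forall x, x \in avars h -> (x < N)%N) ->
  Defs.idempotent (inst N (aargs h)) /\
  mgu (inst N (aargs h)) (Atom (apred h) (map V (iota N (size (aargs h))))) h /\
  relevant (inst N (aargs h)) (Atom (apred h) (map V (iota N (size (aargs h))))) h.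
Proof.
move=> HN.
have Hv : forall i y, (i < size (aargs h))%N ->
    y \in tvars (nth (V 0) (aargs h) i) -> y \in avars h.
  by move=> i y Hi Hy; apply: mem_flatten_map2 (In_nth_lt _ Hi) Hy.
have Hout : forall y, y \in avars h -> inst N (aargs h) y = V y.
  move=> y Hy; rewrite /inst; have := HN y Hy.
  by case: ifP => //; move/andP=> [H1 _] H2; exfalso; lia.
have Hid : asubst (inst N (aargs h)) h = h by apply: asubst_id_on.
split; [|split; [split|]].
- move=> x; case Hx: (N <= x < N + size (aargs h))%N; last by rewrite /= /inst Hx /= /inst Hx.
  have -> : inst N (aargs h) x = nth (V 0) (aargs h) (x - N) by rewrite /inst Hx.
  apply: tsubst_id_on => y Hy; apply: Hout; apply: (Hv (x - N)%N) => //.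
  by move/andP: Hx => [H1 H2]; lia.
- by rewrite /unifier inst_gen Hid atom_eta.
- move=> s Hs; exists s => x; rewrite /inst; case: ifP => Hx //.
  rewrite /unifier /asubst /= in Hs; case: Hs => Hs.
  have Hi : (x - N < size (aargs h))%N by move/andP: Hx => [H1 H2]; lia.
  have := congr1 (fun l => nth (V 0) l (x - N)) Hs => /=.
  rewrite (nth_map (V 0)) ?size_map ?size_iota //.
  rewrite (nth_map (V 0)) ?size_map ?size_iota //.
  rewrite (nth_map 0%N) ?size_map ?size_iota // nth_iota //= => <-.
  by congr (s _); move/andP: Hx => [H1 H2]; lia.
- move=> x; rewrite /inst; case: ifP => Hx // _; split.
  + by rewrite mem_cat avars_Vs mem_iota Hx.
  + move=> y Hy; rewrite mem_cat; apply/orP; right; apply: (Hv (x - N)%N) => //.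
    by move/andP: Hx => [H1 H2]; lia.
Qed.

End Inst.

Theorem theoremt4p1p1 (Fsym Psym : Type) (S : step Fsym Psym -> Prop) :
  sched_rule S -> stack_queue S.
Proof.
move=> [HS [[Comp1 _] SI]] h B HB.
pose n := size (aargs h).
pose N := (sumn (avars h ++ gvars B)).+1.
have HN : forall x, x \in avars h ++ gvars B -> (x < N)%N.
  by move=> x Hx; rewrite ltnS; apply: leq_sumn_mem.
pose a0 : atom Fsym Psym := Atom (apred h) (map (@Var Fsym) (iota N n)).
pose k0 : atom Fsym Psym := Atom (apred h) [::].
have HNh : forall x, x \in avars h -> (x < N)%N.
  by move=> x Hx; apply: HN; rewrite mem_cat Hx.
have [Hid0 [Hmgu0 Hrel0]] := @inst_facts Fsym Psym h N HNh.
have [s0 [S0 [EG0 EC0]]] : exists s, S s /\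
    st_goal s = [:: (a0, 0); (k0, 1)] /\ st_clause s = (h, B).
  apply: Comp1.
  apply: (@mk_step _ _ _ h B (@Var Fsym) (inst N (aargs h)) (a0, 0) [:: (k0, 1)]) => //.
  - by exists id; split => //; exists id.
  - move=> x; rewrite asubst_Var gsubst_Var /gvars /= cats0 avars_Vs => Hx.
    apply/negP => /HN; rewrite mem_iota in Hx; move/andP: Hx => [Hx _]; lia.
  - by rewrite asubst_Var.
  - by rewrite asubst_Var.
have [p0 V0] := HS s0 S0.
have Sh0 := V0.2.2.1.
pose below := fun b : rat => p0 b < 1.
exists (filter (fun x => below x.2) B), (filter (fun x => ~~ below x.2) B).
have Ht : transitive (fun x y : patom Fsym Psym => x.2 < y.2).
  by move=> ? ? ? H1 H2; exact: lt_trans H1 H2.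
have Hmono : forall x y, List.In x B -> List.In y B -> x.2 < y.2 ->
    below y.2 -> below x.2.
  by move=> x y _ _ Hxy; rewrite /below; apply: lt_trans; apply: Sh0.1.
have EB := split_filter HB Hmono.
have Hplt : plt (filter (fun x => below x.2) B) (filter (fun x => ~~ below x.2) B).
  move=> x y; rewrite (prios_filter below) (prios_filter (fun b => ~~ below b)).
  rewrite !mem_filter => /andP[Hx _] /andP[Hy _].
  case: (ltgtP x y) => // [Hyx|Exy].
  - by move: Hy; rewrite /below (lt_trans (Sh0.1 _ _ Hyx) Hx).
  - by move: Hy; rewrite -Exy Hx.
split; first by rewrite /is_pgoal; apply: sorted_filter.
split; first by rewrite /is_pgoal; apply: sorted_filter.
split=> //; split=> //.
move=> s Ss Ecl.
have [pi Vs] := HS s Ss.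
have Shpi := Vs.2.2.1.
have [HGs [_ [_ [Ren [[a1 pa] [K [EG [Hdis [Hid [Hmgu [Hrel _]]]]]]]]]]] := Vs.
rewrite Ecl /= in Hdis Hmgu Hrel.
have HGs' : is_pgoal ((a1, pa) :: K) by rewrite -EG.
have HsK : is_pgoal K := path_sorted HGs'.
have HpK : forall y, List.In y K -> pa < y.2 := fun y Hy => pgoal_head_lt HGs' Hy.
have Hap : apred a1 = apred h by have := congr1 (@apred _ _) Hmgu.1.
have Hsz : size (aargs a1) = size (aargs h).
  by have := congr1 (fun a => size (aargs a)) Hmgu.1; rewrite /= !size_map.
have [Dis Res] := step_via_goal Vs EG.
rewrite Ecl /= in Dis Res.
have BM : forall b, b \in prios B -> below b -> forall k, List.In k K -> pi b < k.2.
  move=> b Hb Hbl k Hk.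
  case: K EG HGs' HsK HpK Hk Dis Res => [|k1 K1] EG HGs' HsK HpK Hk Dis Res //.
  pose q := (pa + k1.2) / 2.
  have Hpk1 : pa < k1.2 := HpK k1 (or_introl erefl).
  have Hq1 : pa < q by rewrite /q; lra.
  have Hq2 : q < k1.2 by rewrite /q; lra.
  have HqK : forall y, List.In y (k1 :: K1) -> q < y.2.
    move=> y [<-|Hy] //; exact: lt_trans Hq2 (pgoal_head_lt HsK Hy).
  have HGt : is_pgoal [:: (a1, pa), (k0, q), k1 & K1].
    by move: HGs'; rewrite /is_pgoal /= => /andP[_ ->]; rewrite Hq1 Hq2.
  have [t [St [EGt ECt]]] : exists t, S t /\
      st_goal t = [:: (a1, pa), (k0, q), k1 & K1] /\ st_clause t = (h, B).
    apply: Comp1.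
    apply: (@mk_step _ _ _ h B (st_ren s) (st_mgu s) (a1, pa) [:: (k0, q), k1 & K1]) => //.
    by move=> x Hx; apply: Hdis; rewrite EG; exact: Hx.
  have [pt Vt] := HS t St.
  have Hd1 : pdisj (k1 :: K1) [:: (k0, q)].
    move=> y /In_map_snd [z [Hz <-]]; rewrite inE; apply/negP => /eqP E.
    by have := HqK z Hz; rewrite E ltxx.
  have L1 : lowering t s [:: (k0, q)].
    apply: (@low_id _ _ s t (a1, pa) (k1 :: K1)) => //.
    - by exists pi.
    - by exists pt.
    - by rewrite ECt Ecl.
    - by move=> q0; rewrite inE => /eqP ->.
    rewrite EGt; congr (_ :: _); symmetry; apply: padd_char.
    + exact: path_sorted HGt.
    + by move=> x; rewrite /= List.in_app_iff /=; tauto.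
    + by apply: uniq_padd.
  have C1 := SI s t [:: (k0, q)] Ss St L1.
  have L2 : lowering t s0 (k1 :: K1).
    apply: (@low_gen _ _ s0 t h N a1 pa q (k1 :: K1)) => //.
    - by exists p0.
    - by exists pt.
    - by rewrite ECt EC0.
    - apply/negP => /In_map_snd [z [Hz Ez]].
      by have := HqK z Hz; rewrite Ez ltxx.
    - by move=> q0 /In_map_snd [z [Hz <-]]; apply: HpK.
    rewrite EGt; congr (_ :: _); symmetry; apply: padd_char.
    + exact: path_sorted HGt.
    + by [].
    + apply: uniq_padd => //.
      by move=> y; rewrite inE => /eqP ->; apply/negP => /In_map_snd [z [Hz Ez]];
         have := HqK z Hz; rewrite Ez ltxx.
  have C2 := SI s0 t (k1 :: K1) S0 St L2.
  have [y [Hy [Hyn Hyiff]]] :=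
    cong_pos C2 V0 Vt EG0 (x := (k0, 1)) (or_introl erefl).
  rewrite EGt /= in Hy.
  have Ey : y.2 = q.
    case: Hy => [<-|Hy] //; exfalso; move: Hyn.
    by rewrite (In_map_mem snd (Hy : List.In y (k1 :: K1))).
  have [y' [Hy' [Hyn' Hyiff']]] := cong_pos C1 Vs Vt EG Hk.
  rewrite EGt /= in Hy'.
  have Hy'K : q < y'.2.
    case: Hy' => [E|Hy'']; last exact: HqK.
    by move: Hyn'; rewrite -E /= inE eqxx.
  have h1 : pt b < q.
    rewrite -Ey; apply/(Hyiff b _).1; first by rewrite EC0.
    exact: Hbl.
  by apply/(Hyiff' b _).2; [rewrite Ecl | exact: lt_trans h1 Hy'K].
have AM : forall b, b \in prios B -> ~~ below b -> forall k, List.In k K -> k.2 < pi b.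
  move=> b Hb Hbn k Hk.
  have [M HM] := ub_exists (pa :: prios K).
  have HqK : forall y, List.In y K -> y.2 < M.
    by move=> y Hy; apply: HM; rewrite in_cons (In_map_mem snd Hy) orbT.
  have Hpq : pa < M by apply: HM; rewrite in_cons eqxx.
  have HGt : is_pgoal ((a1, pa) :: K ++ [:: (k0, M)]).
    rewrite is_pgoalE.
    have -> : prios ((a1, pa) :: K ++ [:: (k0, M)]) = prios ((a1, pa) :: K) ++ [:: M] by rewrite /prios /= map_cat.
    apply: sorted_cat_rat => //; first by rewrite -is_pgoalE.
    by move=> x z Hx; rewrite inE => /eqP ->; apply: HM.
  have [t [St [EGt ECt]]] : exists t, S t /\
      st_goal t = (a1, pa) :: K ++ [:: (k0, M)] /\ st_clause t = (h, B).
    apply: Comp1.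
    apply: (@mk_step _ _ _ h B (st_ren s) (st_mgu s) (a1, pa) (K ++ [:: (k0, M)])) => //.
    move=> x Hx; apply: Hdis; rewrite EG.
    by move: Hx; rewrite /gvars /= map_cat flatten_cat /= cats0.
  have [pt Vt] := HS t St.
  have Hd1 : pdisj K [:: (k0, M)].
    move=> y /In_map_snd [z [Hz <-]]; rewrite inE; apply/negP => /eqP E.
    by have := HqK z Hz; rewrite E ltxx.
  have HtK : is_pgoal (K ++ [:: (k0, M)]) := path_sorted HGt.
  have L1 : lowering t s [:: (k0, M)].
    apply: (@low_id _ _ s t (a1, pa) K) => //.
    - by exists pi.
    - by exists pt.
    - by rewrite ECt Ecl.
    - by move=> q0; rewrite inE => /eqP ->.
    rewrite EGt; congr (_ :: _); symmetry; apply: padd_char => //.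
    by apply: uniq_padd.
  have C1 := SI s t [:: (k0, M)] Ss St L1.
  have L2 : lowering t s0 K.
    apply: (@low_gen _ _ s0 t h N a1 pa M K) => //.
    - by exists p0.
    - by exists pt.
    - by rewrite ECt EC0.
    - apply/negP => /In_map_snd [z [Hz Ez]].
      by have := HqK z Hz; rewrite Ez ltxx.
    - by move=> q0 /In_map_snd [z [Hz <-]]; apply: HpK.
    rewrite EGt; congr (_ :: _); symmetry; apply: padd_char => //.
    + by move=> x; rewrite /= !List.in_app_iff /=; tauto.
    + apply: uniq_padd => //.
      by move=> y; rewrite inE => /eqP ->; apply/negP => /In_map_snd [z [Hz Ez]];
         have := HqK z Hz; rewrite Ez ltxx.
  have C2 := SI s0 t K S0 St L2.
  have [y [Hy [Hyn Hyiff]]] :=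
    cong_pos C2 V0 Vt EG0 (x := (k0, 1)) (or_introl erefl).
  rewrite EGt /= in Hy.
  have Ey : y.2 = M.
    case/List.in_app_iff: Hy => [Hy|[<-|[]]] //; exfalso; move: Hyn.
    by rewrite (In_map_mem snd Hy).
  have Hne : pt b != M.
    have := @pdisj_ne _ _ t pt (a1, pa) (K ++ [:: (k0, M)]) b (k0, M) Vt EGt.
    rewrite ECt; apply => //; apply/List.in_app_iff; by right; left.
  have h1 : M < pt b.
    case: (ltgtP (pt b) M) => // [Hlt|Heq]; last by rewrite Heq eqxx in Hne.
    have := (Hyiff b _).2; rewrite Ey EC0 => /(_ Hb Hlt) /= Hp.
    by move: Hbn; rewrite /below Hp.
  have [y' [Hy' [Hyn' Hyiff']]] := cong_pos C1 Vs Vt EG Hk.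
  rewrite EGt /= in Hy'.
  have Hy'K : y'.2 < M.
    case/List.in_app_iff: Hy' => [Hy''|[E|[]]]; first exact: HqK.
    by move: Hyn'; rewrite -E /= inE eqxx.
  have Hnlt : ~ (pi b < k.2).
    move/(Hyiff' b _).1; rewrite Ecl => /(_ Hb) Hlt.
    by have := lt_trans (lt_trans Hlt Hy'K) h1; rewrite ltxx.
  have Hne' : pi b != k.2.
    by apply: (@pdisj_ne _ _ s pi (a1, pa) K) => //; rewrite Ecl.
  by case: (ltgtP (pi b) k.2) Hne' Hnlt.
exists (a1, pa), K, pi; split=> //; split=> //.
move=> Ms' Mq'.
have HMs : plt Ms' K.
  move=> x z; rewrite /Ms' prios_gshift prios_gsubst (prios_filter below).
  move=> /mapP [b Hb ->] /In_map_snd [k [Hk <-]].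
  by rewrite mem_filter in Hb; case/andP: Hb => Hbl Hb; apply: BM.
have HMq : plt K Mq'.
  move=> z x; rewrite /Mq' prios_gshift prios_gsubst (prios_filter (fun b => ~~ below b)).
  move=> /In_map_snd [k [Hk <-]] /mapP [b Hb ->].
  by rewrite mem_filter in Hb; case/andP: Hb => Hbl Hb; apply: AM.
have HMM : plt Ms' Mq'.
  move=> x z; rewrite /Ms' /Mq' !prios_gshift !prios_gsubst.
  move=> /mapP [b Hb ->] /mapP [c Hc ->]; apply: Shpi.1; exact: Hplt.
split=> //; split=> //; split=> //.
have Hu : uniq (prios (K ++ gshift pi (gsubst (st_ren s) B))).
  apply: uniq_padd => //; apply: is_pgoal_gshift => //; by rewrite is_pgoal_gsubst.
have EB' : gshift pi (gsubst (st_ren s) B) = Ms' ++ Mq'.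
  by rewrite {1}EB gsubst_cat gshift_cat.
rewrite Res; congr (gsubst _ _); rewrite EB' in Hu *.
have SMs : is_pgoal Ms'.
  apply: is_pgoal_gshift => //; rewrite is_pgoal_gsubst; by rewrite /is_pgoal; apply: sorted_filter.
have SMq : is_pgoal Mq'.
  apply: is_pgoal_gshift => //; rewrite is_pgoal_gsubst; by rewrite /is_pgoal; apply: sorted_filter.
apply: padd_char => //.
- rewrite is_pgoalE !prios_cat; apply: sorted_cat_rat; first by rewrite -is_pgoalE.
  + apply: sorted_cat_rat; rewrite -?is_pgoalE //.
  + by move=> x z Hx; rewrite mem_cat => /orP[]; [apply: HMs | apply: HMM].
- by move=> x; rewrite !List.in_app_iff; tauto.
Qed.
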